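(* Let $G\le S_n$ be fusion controlled and $T\in\mathcal T(G_0)$. (i) For every connected component $C$ of $\widetilde P_0(G)$ containing at least one vertex of type $T$, the number of components of $\widetilde P_0(G)$ containing at least one vertex of type $T$ equals $\dfrac{\mu_T(G)}{\phi(o(T))\,k_C(T)}$. (ii) If $T$ is isolated in $P_0(\mathcal T(G))$, this number equals $\dfrac{\mu_T(G)}{\phi(o(T))}$.
   Context: $G_0=G\setminus\{1\}$; $[x]=\{y:\langle y\rangle=\langle x\rangle\}$; $\widetilde P_0(G)$: vertex set $\{[x]:x\in G_0\}$, distinct $[x],[y]$ adjacent iff some representatives are one a positive power of the other. For $\psi\in S_n$, $T_\psi$ is the partition of $n$ given by orbit lengths of $\langle\psi\rangle$; the type of $[\psi]$ is $T_\psi$. For $T=[m_1^{t_1},\dots,m_k^{t_k}]$, $o(T)=\mathrm{lcm}(m_i)$ and $T^a=[(m_i/\gcd(a,m_i))^{t_i\gcd(a,m_i)}]_i$. $\mathcal T(G_0)=\{T_\psi:\psi\in G_0\}$; $P_0(\mathcal T(G))$: vertex set $\mathcal T(G_0)$, distinct $T,T'$ adjacent iff one is a power of the other. $\mu_T(G)$ is the number of elements of $G$ of type $T$; $\phi$ is Euler's totient; $k_C(T)$ is the number of vertices of $C$ of type $T$. $G$ is fusion controlled if for all $\psi\in G$, $x\in S_n$ with $x^{-1}\psi x\in G$ there is $y\in N_{S_n}(G)$ with $x^{-1}\psi x=y^{-1}\psi y$. *)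

(* Defs.v *)
From HB Require Import structures.
From mathcomp Require Import all_boot all_order all_fingroup all_solvable.
Set Implicit Arguments. Unset Strict Implicit. Unset Printing Implicit Defensive.

Local Open Scope group_scope.

Section Defs.
Variable n : nat.
Local Notation gT := {perm 'I_n}.

(* The type T_psi: multiset (sorted list) of orbit lengths of <psi> on {0..n-1},
   fixed points counted as orbits of length 1. *)
Definition ptype (psi : gT) : seq nat :=
  sort leq [seq #|X| | X : {set 'I_n} <- enum (porbits psi)].

Definition tord (T : seq nat) : nat := foldr lcmn 1%N T.

Definition tpow (T : seq nat) (a : nat) : seq nat :=
  sort leq (flatten [seq nseq (gcdn a m) (m %/ gcdn a m) | m <- T]).

Definition pclass (x : gT) : {set gT} := [set y | <[y]> == <[x]>].

Definition pverts (G : {group gT}) : {set {set gT}} := [set pclass x | x in G^#].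

(* b is a positive power of a (powers a^1 .. a^#|gT| cover all positive powers) *)
Definition ppow (a b : gT) : bool := [exists k : 'I_#|gT|, b == a ^+ k.+1].

Definition padj (G : {group gT}) : rel {set gT} := fun X Y =>
  [&& X \in pverts G, Y \in pverts G, X != Y &
      [exists a in X, exists b in Y, ppow a b || ppow b a]].

Definition pcomp (G : {group gT}) (v : {set gT}) : {set {set gT}} :=
  [set w in pverts G | connect (padj G) v w].

Definition pcomps (G : {group gT}) : {set {set {set gT}}} :=
  [set pcomp G v | v in pverts G].

(* type of a vertex [x] (well defined: all elements of [x] have the same type) *)
Definition vtype (v : {set gT}) : seq nat := ptype (repr v).

Definition ncompT (G : {group gT}) (T : seq nat) : nat :=
  #|[set C in pcomps G | [exists v in C, vtype v == T]]|.

Definition kC (C : {set {set gT}}) (T : seq nat) : nat :=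
  #|[set v in C | vtype v == T]|.

Definition muT (G : {group gT}) (T : seq nat) : nat :=
  #|[set x in G | ptype x == T]|.

Definition types0 (G : {group gT}) : seq (seq nat) :=
  [seq ptype x | x in G^#].

Definition type_isolated (G : {group gT}) (T : seq nat) : Prop :=
  forall T', T' \in types0 G -> T' != T ->
    ~ (exists a, T' = tpow T a) /\ ~ (exists a, T = tpow T' a).

Definition fusion_controlled (G : {group gT}) : Prop :=
  forall (psi x : gT), psi \in G -> psi ^ x \in G ->
    exists2 y, y \in 'N(G) & psi ^ x = psi ^ y.

End Defs.

(* Main.v *)
Require Import Defs.
From HB Require Import structures.
From mathcomp Require Import all_boot all_order all_fingroup all_solvable.
Set Implicit Arguments. Unset Strict Implicit. Unset Printing Implicit Defensive.

Lemma dvd_kj m k j : 0 < m -> (m %| k * j) = (m %/ gcdn k m %| j).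
Proof.
move=> m0; set g := gcdn k m.
have g0 : 0 < g by rewrite gcdn_gt0 m0 orbT.
have em : m = m %/ g * g by rewrite divnK // dvdn_gcdr.
have ek : k = k %/ g * g by rewrite divnK // dvdn_gcdl.
have cop : coprime (m %/ g) (k %/ g).
  rewrite /coprime; apply/eqP; apply/eqP; rewrite -(eqn_pmul2r g0).
  by rewrite mul1n muln_gcdl -em -ek gcdnC.
rewrite {1}em {1}ek.
have -> : k %/ g * g * j = g * (k %/ g * j) by rewrite mulnAC mulnC.
rewrite [m %/ g * g]mulnC dvdn_pmul2l //.
exact: Gauss_dvdr.
Qed.

Section Proof_.
Local Open Scope group_scope.

Section Orb.
Variable T : finType.
Implicit Types s : {perm T}.

Lemma iter_porbit_mul s x q : iter (q * #|porbit s x|) s x = x.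
Proof.
elim: q => [|q IH] //; by rewrite mulSn iterD IH iter_porbit.
Qed.

Lemma permX_mod s x j : (s ^+ j) x = (s ^+ (j %% #|porbit s x|)) x.
Proof.
by rewrite !permX {1}(divn_eq j #|porbit s x|) addnC iterD iter_porbit_mul.
Qed.

Lemma porbit_fix s x j : ((s ^+ j) x == x) = (#|porbit s x| %| j).
Proof.
rewrite permX_mod /dvdn.
have m0 : 0 < #|porbit s x| by rewrite lt0n card_porbit_neq0.
have lt := ltn_pmod j m0.
have U := uniq_traject_porbit s x.
rewrite -(nth_uniq x _ _ U) ?size_traject //.
by rewrite !nth_traject // permX.
Qed.

Lemma porbit_inj s x i j : i < #|porbit s x| -> j < #|porbit s x| ->
  (s ^+ i) x = (s ^+ j) x -> i = j.
Proof.
move=> Hi Hj E; apply/eqP.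
have U := uniq_traject_porbit s x.
by rewrite -(nth_uniq x _ _ U) ?size_traject // !nth_traject // -!permX E.
Qed.

End Orb.


Lemma tord_dvd T k : (tord T %| k)%N = all (fun m => m %| k)%N T.
Proof. rewrite /tord; elim: T => [|m T IH] /=; [by rewrite dvd1n | by rewrite dvdn_lcm IH]. Qed.

Section Ord.
Variable n : nat.
Implicit Types x : {perm 'I_n}.

Lemma all_ptype x (P : pred nat) :
  all P (ptype x) = [forall i, P #|porbit x i|].
Proof.
rewrite /ptype all_sort all_map; apply/allP/forallP => [H i | H X].
  by apply: (H (porbit x i)); rewrite mem_enum imset_f.
by rewrite mem_enum => /imsetP[i _ ->]; apply: H.
Qed.

Lemma tord_ptype x : tord (ptype x) = #[x].
Proof.
have key k : (tord (ptype x) %| k)%N = (#[x] %| k)%N.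
  rewrite tord_dvd all_ptype order_dvdn.
  apply/forallP/eqP => [H | E i].
    by apply/permP => i; rewrite perm1; apply/eqP; rewrite porbit_fix; apply: H.
  by rewrite -porbit_fix E perm1.
by apply/eqP; rewrite eqn_dvd key dvdnn -key dvdnn.
Qed.

Lemma card_pclass x : #|pclass x| = totient #[x].
Proof.
rewrite totient_gen; apply: eq_card => y; rewrite !inE /generator eq_sym.
by [].
Qed.

End Ord.


Lemma count_enum_set (U : finType) (A : {set U}) (P : pred U) :
  count P (enum A) = #|[set x in A | P x]|.
Proof.
rewrite -size_filter cardE; apply: perm_size; apply: uniq_perm.
- by rewrite filter_uniq ?enum_uniq.
- by rewrite enum_uniq.
by move=> x; rewrite mem_filter !mem_enum !inE andbC.
Qed.

Section Cnt.
Variable n : nat.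
Implicit Types x : {perm 'I_n}.

Definition cnt x m := #|[set X in porbits x | #|X| == m]|.

Lemma count_ptype x m : count_mem m (ptype x) = cnt x m.
Proof.
rewrite /ptype (seq.permP (permEl (perm_sort leq _))) count_map count_enum_set /cnt.
by apply: eq_card => X; rewrite !inE eq_sym.
Qed.

Lemma ptype_eqP x z : ptype x = ptype z <-> (forall m, cnt x m = cnt z m).
Proof.
split => [E m | H]; first by rewrite -!count_ptype E.
rewrite /ptype; apply/perm_sortP; [exact: leq_total | exact: leq_trans | exact: anti_leq |].
rewrite /perm_eq; apply/allP => m _ /=.
by rewrite -(seq.permP (permEl (perm_sort leq _))) -[X in _ == X](seq.permP (permEl (perm_sort leq _))) !count_ptype H.
Qed.

End Cnt.


Section Conj.
Variable T : finType.
Implicit Types x y : {perm T}.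

Lemma conj_app x y i : (x ^ y) (y i) = y (x i).
Proof. by rewrite conjgE !permM permK. Qed.

Lemma porbit_conj x y i : porbit (x ^ y) (y i) = y @: porbit x i.
Proof.
apply/setP => j; apply/porbitP/imsetP => [[k ->] | [a /porbitP[k ->] ->]];
  [exists ((x ^+ k) i); first exact: mem_porbit | exists k];
  by rewrite -conjXg conj_app.
Qed.

Lemma porbits_conj x y : porbits (x ^ y) = [set y @: X | X : {set T} in porbits x].
Proof.
apply/setP => Z; apply/imsetP/imsetP => [[j _ ->] | [X /imsetP[i _ ->] ->]].
  by exists (porbit x (y^-1 j)); [exact: imset_f | rewrite -porbit_conj permKV].
by exists (y i) => //; rewrite porbit_conj.
Qed.

End Conj.

Lemma cnt_conj n (x y : {perm 'I_n}) m : cnt (x ^ y) m = cnt x m.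
Proof.
rewrite /cnt porbits_conj.
have inj : injective (fun X : {set 'I_n} => y @: X) by apply: imset_inj; exact: perm_inj.
have cy (X : {set 'I_n}) : #|y @: X| = #|X| by apply: card_imset; exact: perm_inj.
rewrite -[RHS](card_imset _ inj); apply: eq_card => Z; rewrite !inE.
apply/andP/imsetP => [[/imsetP[X XP ->] c] | [X] ].
  by exists X => //; rewrite inE XP -cy.
by rewrite inE => /andP[XP c] ->; rewrite imset_f //= cy.
Qed.

Lemma ptype_conj n (x y : {perm 'I_n}) : ptype (x ^ y) = ptype x.
Proof. by apply/ptype_eqP => m; apply: cnt_conj. Qed.


Lemma match_sets (U : finType) (w : U -> nat) (A A' : {set U}) :
  (forall m, #|[set a in A | w a == m]| = #|[set a in A' | w a == m]|) ->
  exists B : U -> U, {in A, forall a, B a \in A' /\ w (B a) = w a} /\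
                     {in A &, injective B}.
Proof.
move: {2}#|A| (leqnn #|A|) => N; elim: N A A' => [|N IH] A A' HN H.
  exists id; split => a; first by move=> aA; move: HN; rewrite (cardD1 a) aA.
  by move=> b aA; move: HN; rewrite (cardD1 a) aA.
case: (set_0Vmem A) => [-> | [a aA]].
  by exists id; split => b; rewrite inE.
have : a \in [set b in A | w b == w a] by rewrite inE aA eqxx.
move=> aS; have : 0 < #|[set b in A' | w b == w a]| by rewrite -H card_gt0; apply/set0Pn; exists a.
rewrite card_gt0 => /set0Pn[a' ]; rewrite inE => /andP[a'A' /eqP wa'].
have HN' : #|A :\ a| <= N by move: HN; rewrite (cardsD1 a A) aA.
have H' m : #|[set b in A :\ a | w b == m]| = #|[set b in A' :\ a' | w b == m]|.
  have E1 : [set b in A :\ a | w b == m] = [set b in A | w b == m] :\ a.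
    by apply/setP => b; rewrite !inE andbA.
  have E2 : [set b in A' :\ a' | w b == m] = [set b in A' | w b == m] :\ a'.
    by apply/setP => b; rewrite !inE andbA.
  move: (H m); rewrite (cardsD1 a [set b in A | w b == m]) (cardsD1 a' [set b in A' | w b == m]).
  by rewrite !inE aA a'A' wa' /= E1 E2 => /eqP; rewrite eqn_add2l => /eqP.
have [B' [HB1 HB2]] := IH _ _ HN' H'.
exists (fun b => if b == a then a' else B' b); split.
  move=> b bA; case: eqP => [-> | /eqP ba]; first by rewrite a'A' wa'.
  have bA' : b \in A :\ a by rewrite !inE ba.
  by have [/setD1P[_ ->] ->] := HB1 _ bA'.
move=> b c bA cA /=.
have memB d : d != a -> d \in A -> B' d \in A' :\ a'.
  by move=> da dA; have [] := HB1 d; rewrite // !inE da.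
case: eqP => [-> | /eqP ba]; case: eqP => [-> | /eqP ca] //.
- by move=> E; have := memB _ ca cA; rewrite -E !inE eqxx.
- by move=> E; have := memB _ ba bA; rewrite E !inE eqxx.
by apply: HB2; rewrite !inE ?ba ?ca.
Qed.

Section Porb.
Variable T : finType.
Variable d0 : T.
Implicit Types s : {perm T}.

Definition rep (X : {set T}) := odflt d0 [pick j in X].

Lemma rep_mem (X : {set T}) j : j \in X -> rep X \in X.
Proof. by rewrite /rep; case: pickP => [k -> | /(_ j) ->]. Qed.

Lemma repr_porbit s i : rep (porbit s i) \in porbit s i.
Proof. by apply: rep_mem (porbit_id s i). Qed.

Lemma porbit_repr s i : porbit s (rep (porbit s i)) = porbit s i.
Proof. by apply/eqP; rewrite eq_porbit_mem repr_porbit. Qed.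

Lemma porbits_repr s Y : Y \in porbits s -> porbit s (rep Y) = Y.
Proof. by case/imsetP => a _ ->; apply: porbit_repr. Qed.

Lemma porbit_mem s i j : j \in porbit s i -> porbit s j = porbit s i.
Proof. by move=> H; apply/eqP; rewrite eq_porbit_mem. Qed.
End Porb.

Section Conjugator.
Variable n : nat.
Variable d0 : 'I_n.
Variables x z : {perm 'I_n}.
Variable B : {set 'I_n} -> {set 'I_n}.
Hypothesis HB1 : {in porbits x, forall a, B a \in porbits z /\ #|B a| = #|a|}.
Hypothesis HB2 : {in porbits x &, injective B}.

Definition idxX (X : {set 'I_n}) (i : 'I_n) : nat := index i (traject x (rep d0 X) #|X|).
Definition cf (i : 'I_n) : 'I_n := (z ^+ idxX (porbit x i) i) (rep d0 (B (porbit x i))).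

Lemma Xin i : porbit x i \in porbits x. Proof. exact: imset_f. Qed.

Lemma idx_spec X i : porbit x i = X ->
  idxX X i < #|X| /\ (x ^+ idxX X i) (rep d0 X) = i.
Proof.
move=> <-.
have mem : i \in traject x (rep d0 (porbit x i)) #|porbit x i|.
  by rewrite -{2}(porbit_repr d0 x i) -porbit_traject porbit_repr porbit_id.
have lt : idxX (porbit x i) i < #|porbit x i|.
  by rewrite /idxX -{2}(size_traject x (rep d0 (porbit x i)) #|porbit x i|) index_mem.
split=> //.
by rewrite permX -(@nth_traject _ x _ _ lt) nth_index.
Qed.

Lemma Y_spec X : X \in porbits x ->
  porbit z (rep d0 (B X)) = B X /\ #|porbit z (rep d0 (B X))| = #|X|.
Proof.
move=> XP; have [H1 H2] := HB1 XP.
by rewrite porbits_repr // H2.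
Qed.

Lemma cf_pow i k : cf ((x ^+ k) (rep d0 (porbit x i))) = (z ^+ k) (rep d0 (B (porbit x i))).
Proof.
have Ej : porbit x ((x ^+ k) (rep d0 (porbit x i))) = porbit x i.
  by rewrite porbit_perm porbit_repr.
have [lt E] := idx_spec Ej.
rewrite /cf Ej.
have [_ cz] := Y_spec (Xin i).
rewrite [in RHS]permX_mod cz.
congr ((z ^+ _) _); apply: (@porbit_inj _ x (rep d0 (porbit x i))).
- by rewrite porbit_repr.
- by rewrite porbit_repr ltn_pmod // lt0n card_porbit_neq0.
have := permX_mod x (rep d0 (porbit x i)) k; rewrite porbit_repr => <-.
by rewrite E.
Qed.

Lemma cf_comm i : cf (x i) = z (cf i).
Proof.
have [_ E] := idx_spec (erefl (porbit x i)).
have -> : x i = (x ^+ (idxX (porbit x i) i).+1) (rep d0 (porbit x i)) by rewrite expgSr permM E.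
by rewrite cf_pow expgSr permM.
Qed.

Lemma cf_mem j : cf j \in B (porbit x j).
Proof. by have [<- _] := Y_spec (Xin j); rewrite /cf mem_porbit. Qed.

Lemma cf_inj : injective cf.
Proof.
move=> i i' E.
have F j : porbit z (cf j) = B (porbit x j).
  have [e _] := Y_spec (Xin j); rewrite -e; apply: porbit_mem; rewrite e; exact: cf_mem.
have EY : B (porbit x i) = B (porbit x i') by rewrite -F E F.
have EX : porbit x i = porbit x i' by apply: HB2 (Xin i) (Xin i') EY.
have [lt1 E1] := idx_spec (erefl (porbit x i)).
have [lt2 E2] := idx_spec (esym EX).
rewrite -E1 -E2; congr ((x ^+ _) _).
have [_ c] := Y_spec (Xin i).
apply: (@porbit_inj _ z (rep d0 (B (porbit x i)))); rewrite ?c //.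
by move: E; rewrite /cf -EX.
Qed.

End Conjugator.

Lemma ptype_conjP n (x z : {perm 'I_n}) : ptype x = ptype z -> exists y, x ^ y = z.
Proof.
case: n x z => [|n'] x z H.
  by exists 1; apply/permP => -[].
move/ptype_eqP: H => H.
have [B [HB1 HB2]] := match_sets (w := fun X : {set 'I_n'.+1} => #|X|) H.
pose p := perm (@cf_inj _ ord0 _ _ _ HB1 HB2).
exists p; apply/permP => j.
by rewrite -(permKV p j) conj_app !permE cf_comm.
Qed.




Section Pow.
Variable T : finType.
Variable a : {perm T}.
Variable k : nat.

Lemma card_porbitX i :
  #|porbit (a ^+ k) i| = #|porbit a i| %/ gcdn k #|porbit a i|.
Proof.
have m0 : (0 < #|porbit a i|)%N by rewrite lt0n card_porbit_neq0.
have key j : (#|porbit (a ^+ k) i| %| j)%N = (#|porbit a i| %/ gcdn k #|porbit a i| %| j)%N.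
  by rewrite -porbit_fix -expgM porbit_fix dvd_kj.
by apply/eqP; rewrite eqn_dvd key dvdnn -key dvdnn.
Qed.

Lemma porbitX_sub i : porbit (a ^+ k) i \subset porbit a i.
Proof.
by apply/subsetP => j /porbitP[q ->]; rewrite -expgM mem_porbit.
Qed.

Definition SY (X : {set T}) := [set Y in porbits (a ^+ k) | Y \subset X].

Lemma SY_card_elem i Y : Y \in SY (porbit a i) ->
  #|Y| = #|porbit a i| %/ gcdn k #|porbit a i|.
Proof.
rewrite inE => /andP[/imsetP[j0 _ ->] sub].
have j0X : j0 \in porbit a i by apply: (subsetP sub); exact: porbit_id.
by rewrite card_porbitX (porbit_mem j0X).
Qed.

Lemma card_SY i : #|SY (porbit a i)| = gcdn k #|porbit a i|.
Proof.
set X := porbit a i; set m := #|X|; set g := gcdn k m.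
have d0 : (0 < m %/ g)%N by rewrite -card_porbitX lt0n card_porbit_neq0.
have E1 : m = (\sum_(Y in SY X) \sum_(j in X | porbit (a ^+ k) j == Y) 1)%N.
  rewrite -[LHS]sum1_card; apply: partition_big => j jX.
  rewrite inE imset_f //=; apply: subset_trans (porbitX_sub j) _.
  by rewrite /X (porbit_mem jX).
have E2 : m = (#|SY X| * (m %/ g))%N.
  rewrite -sum_nat_const {1}E1; apply: eq_bigr => Y YS.
  rewrite -(SY_card_elem YS) -sum1_card; apply: eq_bigl => j.
  move: YS; rewrite inE => /andP[/imsetP[j0 _ ->] sub].
  apply/andP/idP => [[_ /eqP <-] | jY]; first exact: porbit_id.
  by split; [apply: (subsetP sub) | rewrite (porbit_mem jY)].
have E3 : m = (g * (m %/ g))%N by rewrite mulnC divnK // dvdn_gcdr.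
by apply/eqP; rewrite -(eqn_pmul2r d0) -E2 -E3.
Qed.

Lemma cnt_pow c :
  #|[set Y in porbits (a ^+ k) | #|Y| == c]| =
  (\sum_(X in porbits a) ((#|X| %/ gcdn k #|X| == c) * gcdn k #|X|))%N.
Proof.
rewrite -sum1_card.
transitivity (\sum_(Y in [set Y in porbits (a ^+ k) | #|Y| == c])
                \sum_(X in porbits a | Y \subset X) 1)%N.
  apply: eq_bigr => Y; rewrite inE => /andP[/imsetP[j _ ->] _].
  rewrite sum1_card -(cards1 (porbit a j)); apply: eq_card => X.
  rewrite !inE; apply/eqP/andP => [-> | [/imsetP[i _ ->] sub]].
    by split; [exact: imset_f | exact: porbitX_sub].
  by apply/esym/porbit_mem; apply: (subsetP sub); exact: porbit_id.
rewrite (exchange_big_dep (mem (porbits a))) /=; last by move=> Y X _ /andP[].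
apply: eq_bigr => X /imsetP[i _ ->].
have Xin : porbit a i \in porbits a by exact: imset_f.
rewrite -(card_porbitX i) -card_SY.
case: eqP => [Ec | Nc].
  rewrite mul1n -sum1_card; apply: eq_bigl => Y; rewrite !inE Xin /=.
  apply/andP/andP => [[/andP[YP _] sub] | [YP sub]]; first by [].
  split=> //; rewrite YP /=.
  by rewrite (@SY_card_elem i) ?inE ?YP // -card_porbitX Ec.
rewrite mul0n big_pred0 // => Y; rewrite !inE Xin /=.
apply/negP => /andP[/andP[YP /eqP cY] sub]; apply: Nc.
by rewrite card_porbitX -(@SY_card_elem i Y) ?inE ?YP.
Qed.

End Pow.

Lemma ptype_pow n (a : {perm 'I_n}) k : ptype (a ^+ k) = tpow (ptype a) k.
Proof.
rewrite /tpow {1}/ptype; apply/perm_sortP; [exact: leq_total | exact: leq_trans | exact: anti_leq |].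
rewrite /perm_eq; apply/allP => c _ /=; apply/eqP.
rewrite count_map count_enum_set.
have -> : #|[set x in porbits (a ^+ k) | pred1 c #|x|]| = #|[set Y in porbits (a ^+ k) | #|Y| == c]|.
  by apply: eq_card => X; rewrite !inE.
rewrite cnt_pow count_flatten sumnE big_map.
rewrite big_map /ptype (perm_big _ (permEl (perm_sort leq _))) big_map big_enum /=.
by apply: eq_bigr => X _; rewrite count_nseq.
Qed.


Section Graph.
Variable n : nat.
Local Notation gT := {perm 'I_n}.
Implicit Types x y : gT.

Lemma ptype_cycle x y : <[y]> = <[x]> -> ptype y = ptype x.
Proof.
move=> E.
have Eo : porbit y =1 porbit x by move=> i; rewrite porbit.unlock E.
by rewrite /ptype /porbits (eq_imset _ Eo).
Qed.

Lemma pclassP x y : (y \in pclass x) = (<[y]> == <[x]>).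
Proof. by rewrite inE. Qed.

Lemma pclass_id x : x \in pclass x.
Proof. by rewrite pclassP. Qed.

Lemma pclass_eq x y : y \in pclass x -> pclass y = pclass x.
Proof.
rewrite pclassP => /eqP E; apply/setP => z; by rewrite !pclassP E.
Qed.

Lemma pclass_ptype x y : y \in pclass x -> ptype y = ptype x.
Proof. by rewrite pclassP => /eqP; apply: ptype_cycle. Qed.

Lemma vtype_pclass x : vtype (pclass x) = ptype x.
Proof. by rewrite /vtype; apply: pclass_ptype; apply: mem_repr (pclass_id x). Qed.

Lemma pclass_sub (G : {group gT}) x : x \in G -> pclass x \subset G.
Proof.
move=> xG; apply/subsetP => y; rewrite pclassP => /eqP E.
by rewrite -cycle_subG E cycle_subG.
Qed.

Lemma pclass_conj x y : pclass (x ^ y) = pclass x :^ y.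
Proof.
apply/setP => z; rewrite mem_conjg !pclassP !cycleJ.
by rewrite -[in LHS](inj_eq (@conjsg_inj _ y^-1)) conjsgK.
Qed.

Lemma pclass_card x : #|pclass x| = totient (tord (ptype x)).
Proof. by rewrite card_pclass tord_ptype. Qed.

Lemma ptype1 x : tord (ptype x) = 1%N -> x = 1.
Proof. by rewrite tord_ptype => /eqP; rewrite order_eq1 => /eqP. Qed.

Variable G : {group gT}.

Lemma pvertsP v : reflect (exists2 x, x \in G^# & v = pclass x) (v \in pverts G).
Proof. exact: imsetP. Qed.

Lemma pverts_conj v y : y \in 'N(G) -> v \in pverts G -> v :^ y \in pverts G.
Proof.
move=> yN /pvertsP[x xG ->]; rewrite -pclass_conj; apply: imset_f.
move: xG; rewrite !inE conjg_eq1 => /andP[-> xG] /=.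
by rewrite memJ_norm.
Qed.

Lemma pvertsJ v y : y \in 'N(G) -> (v :^ y \in pverts G) = (v \in pverts G).
Proof.
move=> yN; apply/idP/idP; last exact: pverts_conj.
by move/(pverts_conj (groupVr yN)); rewrite conjsgK.
Qed.

Lemma vtype_conj v y : v \in pverts G -> vtype (v :^ y) = vtype v.
Proof.
by case/pvertsP => x _ ->; rewrite -pclass_conj !vtype_pclass ptype_conj.
Qed.

Lemma ppow_conj a b y : ppow (a ^ y) (b ^ y) = ppow a b.
Proof.
rewrite /ppow; apply: eq_existsb => k.
by rewrite -conjXg (inj_eq (@conjg_inj _ y)).
Qed.

Lemma padj_conj1 X Y y : y \in 'N(G) -> padj G X Y -> padj G (X :^ y) (Y :^ y).
Proof.
move=> yN /and4P[XV YV XY /existsP[a /andP[aX /existsP[b /andP[bY P]]]]].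
apply/and4P; split; rewrite ?pverts_conj //.
  by rewrite (inj_eq (@conjsg_inj _ y)).
apply/existsP; exists (a ^ y); rewrite memJ_conjg aX /=.
by apply/existsP; exists (b ^ y); rewrite memJ_conjg bY !ppow_conj.
Qed.

Lemma connect_conj1 X Y y : y \in 'N(G) ->
  connect (padj G) X Y -> connect (padj G) (X :^ y) (Y :^ y).
Proof.
move=> yN /connectP[p pP ->]; apply/connectP.
exists [seq Z :^ y | Z <- p]; last by rewrite (last_map (fun Z => Z :^ y)).
by apply: homo_path pP => Z W; apply: padj_conj1.
Qed.

Lemma connect_conj X Y y : y \in 'N(G) ->
  connect (padj G) (X :^ y) (Y :^ y) = connect (padj G) X Y.
Proof.
move=> yN; apply/idP/idP; last exact: connect_conj1.
by move/(connect_conj1 (groupVr yN)); rewrite !conjsgK.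
Qed.

Lemma padj_sym1 X Y : padj G X Y -> padj G Y X.
Proof.
move=> /and4P[XV YV XY /existsP[a /andP[aX /existsP[b /andP[bY P]]]]].
apply/and4P; split=> //; first by rewrite eq_sym.
apply/existsP; exists b; rewrite bY /=; apply/existsP; exists a.
by rewrite aX orbC.
Qed.

Lemma padj_sym : symmetric (padj G).
Proof. by move=> X Y; apply/idP/idP; apply: padj_sym1. Qed.

End Graph.


Section Comp.
Variable n : nat.
Local Notation gT := {perm 'I_n}.
Variable G : {group gT}.
Variable T : seq nat.

Lemma csym : connect_sym (padj G).
Proof. apply: sym_connect_sym; exact: padj_sym. Qed.

Lemma pcompP v w : (w \in Defs.pcomp G v) = (w \in pverts G) && connect (padj G) v w.
Proof. by rewrite inE. Qed.

Lemma comp_mem v w : w \in pverts G ->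
  (w \in Defs.pcomp G v) = (Defs.pcomp G w == Defs.pcomp G v).
Proof.
move=> wV; apply/idP/eqP => [ | <-]; last by rewrite pcompP wV connect0.
rewrite pcompP wV /= => vw; apply/setP => u.
by rewrite !pcompP (same_connect csym vw).
Qed.

Lemma kC_conj v y : y \in 'N(G) -> v \in pverts G ->
  kC (Defs.pcomp G (v :^ y)) T = kC (Defs.pcomp G v) T.
Proof.
move=> yN vV; rewrite /kC.
have inj : injective (fun w : {set gT} => w :^ y) by apply: conjsg_inj.
rewrite -[RHS](card_imset _ inj); apply: eq_card => w'.
rewrite -[w'](conjsgKV y).
have /= -> := mem_imset (mem [set w in Defs.pcomp G v | vtype w == T]) (w' :^ y^-1) inj.
rewrite !inE.
rewrite connect_conj // pvertsJ //.
case wV : (w' :^ y^-1 \in pverts G) => //=.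
by rewrite (vtype_conj _ wV).
Qed.

Definition VT := [set w in pverts G | vtype w == T].
Definition CT := [set C in pcomps G | [exists v in C, vtype v == T]].

Lemma ncompTE : ncompT G T = #|CT|. Proof. by []. Qed.

Lemma comp_sub C : C \in pcomps G -> C \subset pverts G.
Proof. by case/imsetP => v _ ->; apply/subsetP => w; rewrite pcompP => /andP[]. Qed.

Hypothesis fus : fusion_controlled G.

Lemma kC_trans C C' : C \in CT -> C' \in CT -> kC C T = kC C' T.
Proof.
rewrite !inE => /andP[/imsetP[v0 v0V ->] /existsP[u0 /andP[u0C /eqP tu0]]].
move=> /andP[/imsetP[v1 v1V ->] /existsP[u1 /andP[u1C /eqP tu1]]].
have u0V : u0 \in pverts G by move: u0C; rewrite pcompP => /andP[].
have u1V : u1 \in pverts G by move: u1C; rewrite pcompP => /andP[].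
move: (u0C) (u1C); rewrite !comp_mem // => /eqP <- /eqP <-.
case/pvertsP: u0V tu0 => a aG -> ta.
case/pvertsP: u1V tu1 => b bG -> tb.
rewrite !vtype_pclass in ta tb.
have [x ax] : exists x, a ^ x = b by apply: ptype_conjP; rewrite ta tb.
have aG' : a \in G by move: aG; rewrite inE => /andP[].
have bG' : a ^ x \in G by rewrite ax; move: bG; rewrite inE => /andP[].
have [y yN axy] := fus aG' bG'.
rewrite -ax axy pclass_conj kC_conj //.
exact: imset_f.
Qed.

Lemma VT_card C : C \in CT -> #|VT| = (ncompT G T * kC C T)%N.
Proof.
move=> CCT; rewrite ncompTE -sum_nat_const -sum1_card.
rewrite (partition_big (fun w => Defs.pcomp G w) (mem CT)); last first.
  move=> w; rewrite !inE => /andP[wV wT]; rewrite imset_f //=.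
  by apply/existsP; exists w; rewrite wT pcompP wV connect0.
apply: eq_bigr => C' C'CT.
rewrite (kC_trans CCT C'CT) /kC -sum1_card; apply: eq_bigl => w.
have C'P : C' \in pcomps G by case/setIdP: C'CT.
rewrite !inE; case wV : (w \in pverts G) => /=; last first.
  apply/esym/negbTE/negP => /andP[wC _].
  by move: (subsetP (comp_sub C'P) _ wC); rewrite wV.
case/imsetP: C'P => v vV ->; rewrite (comp_mem v wV).
by rewrite andbC.
Qed.

Lemma muT_card : T \in types0 G -> muT G T = (#|VT| * totient (tord T))%N.
Proof.
case/imageP => x0 x0G ET.
have T1 : tord T != 1%N.
  apply/eqP => E1; rewrite ET in E1; have x01 := ptype1 E1.
  by move: x0G; rewrite x01 !inE eqxx.
rewrite /muT -sum_nat_const -sum1_card.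
rewrite (partition_big (fun x => pclass x) (mem VT)); last first.
  move=> x; rewrite inE => /andP[xG /eqP xT]; rewrite /VT; apply/setIdP; split; last by rewrite vtype_pclass xT.
  apply: imset_f.
  rewrite !inE xG andbT; apply: contraNneq T1 => x1.
  by rewrite -xT x1 tord_ptype order1.
apply: eq_bigr => w; rewrite /VT => /setIdP[/pvertsP[b bG ->] /eqP tb].
rewrite vtype_pclass in tb.
have bG' : b \in G by move: bG; rewrite inE => /andP[].
rewrite -tb -pclass_card -sum1_card; apply: eq_bigl => x.
apply/andP/idP => [[_ /eqP <-] | xb]; first exact: pclass_id.
split; last by rewrite (pclass_eq xb).
by rewrite inE (subsetP (pclass_sub bG') _ xb) (pclass_ptype xb) tb eqxx.
Qed.

End Comp.


Lemma cyc_eq (gT : finGroupType) (a b : gT) : a \in <[b]> -> #[a] = #[b] -> <[a]> = <[b]>.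
Proof.
move=> ab oab; apply/eqP; rewrite eqEcard cycle_subG ab /=.
by move: oab; rewrite /order => ->.
Qed.

Section Iso.
Variable n : nat.
Local Notation gT := {perm 'I_n}.
Variable G : {group gT}.
Variable T : seq nat.

Lemma isolated_kC v0 : type_isolated G T -> v0 \in pverts G -> vtype v0 = T ->
  kC (Defs.pcomp G v0) T = 1%N.
Proof.
move=> iso v0V tv0.
have noadj w : ~~ padj G v0 w.
  apply/negP => /and4P[_ wV v0w /existsP[a /andP[av /existsP[b /andP[bw P]]]]].
  case/pvertsP: v0V tv0 v0w av => a0 a0G -> ta0 v0w av.
  case/pvertsP: wV v0w bw => b0 b0G -> v0w bw.
  rewrite vtype_pclass in ta0.
  have ta : ptype a = T by rewrite (pclass_ptype av).
  have tb : ptype b = ptype b0 by rewrite (pclass_ptype bw).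
  have b0T : ptype b0 \in types0 G by apply/imageP; exists b0.
  case: (eqVneq (ptype b0) T) => [eT | nT].
    have oab : #[a] = #[b] by rewrite -!tord_ptype ta tb eT.
    have cab : <[a]> = <[b]>.
      case/orP: P => /existsP[k /eqP E].
        by apply/esym/cyc_eq => //; rewrite E mem_cycle.
      by apply: cyc_eq => //; rewrite E mem_cycle.
    move/negP: v0w; apply; apply/eqP.
    rewrite -(pclass_eq av) -(pclass_eq bw); apply/setP => z.
    by rewrite !pclassP cab.
  have [n1 n2] := iso _ b0T nT.
  case/orP: P => /existsP[k /eqP E].
    by apply: n1; exists k.+1; rewrite -tb E ptype_pow ta.
  by apply: n2; exists k.+1; rewrite -ta E ptype_pow tb.
rewrite /kC -(cards1 v0); apply: eq_card => w; rewrite !inE.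
apply/idP/eqP => [/andP[/andP[_ /connectP[p pP ->]] _] | ->].
  by case: p pP => [//|u p] /= /andP[adj _]; rewrite (negbTE (noadj u)) in adj.
by rewrite v0V connect0 tv0 eqxx.
Qed.

End Iso.

End Proof_.

Theorem lemma6p6 (n : nat) (G : {group {perm 'I_n}}) (T : seq nat) :
  fusion_controlled G -> T \in types0 G ->
  (forall C, C \in pcomps G -> [exists v in C, vtype v == T] ->
     ncompT G T * (totient (tord T) * kC C T) = muT G T)%N /\
  (type_isolated G T -> (ncompT G T * totient (tord T) = muT G T)%N).
Proof.
move=> fus Ttyp.
have A C : C \in pcomps G -> [exists v in C, vtype v == T] ->
     (ncompT G T * (totient (tord T) * kC C T) = muT G T)%N.
  move=> CP CT'; have CCT : C \in CT G T by rewrite inE CP CT'.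
  by rewrite (muT_card Ttyp) (VT_card fus CCT) [(totient _ * _)%N]mulnC mulnA.
split=> // iso.
case/imageP: (Ttyp) => x0 x0G ET.
have v0V : pclass x0 \in pverts G by apply: imset_f.
have tv0 : vtype (pclass x0) = T by rewrite vtype_pclass ET.
have := A (Defs.pcomp G (pclass x0)) (imset_f _ v0V).
rewrite (isolated_kC iso v0V tv0) muln1; apply.
by apply/existsP; exists (pclass x0); rewrite tv0 eqxx pcompP v0V connect0.
Qed.
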